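(* Let $X$ be a finite cycle set. The following are equivalent: (1) $X$ is irreducible; (2) there is a finite brace $B$ such that $X\subseteq B$ (with the cycle set structure of $X$ being the one induced from $B$), $X=\{\lambda_b(x):b\in B\}$ for some $x\in X$, and $B=B(x)$ for all $x\in X$.
   Context: A cycle set is a non-empty set $X$ with one operation $\cdot$ such that each $\sigma_x:y\mapsto x\cdot y$ is bijective and $(x\cdot y)\cdot(x\cdot z)=(y\cdot x)\cdot(y\cdot z)$ for all $x,y,z$. A sub-cycle set is a subset that is again a cycle set under the restricted operation (the empty set also counts). $X$ is irreducible if $\emptyset$ and $X$ are its only sub-cycle sets. A brace is a triple $(B,+,\circ)$ with $(B,+)$ an abelian group, $(B,\circ)$ a group, and $a\circ(b+c)=a\circ b-a+a\circ c$; $\lambda_a(b):=-a+a\circ b$, $a^-$ is the inverse of $a$ in $(B,\circ)$, and $B$ is a cycle set via $a\cdot b:=\lambda_{a^-}(b)$. $B(x)$ is the smallest subset of $B$ containing $x$ that is a subgroup of both $(B,+)$ and $(B,\circ)$. *)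

(* Defs.v *)
From mathcomp Require Import all_boot.
Set Implicit Arguments. Unset Strict Implicit. Unset Printing Implicit Defensive.

Definition is_cycle_set (X : Type) (op : X -> X -> X) : Prop :=
  inhabited X /\ (forall x, bijective (op x)) /\
  (forall x y z, op (op x y) (op x z) = op (op y x) (op y z)).

(* Restricted operation well defined: Y closed under op;
   each restricted sigma_x (x in Y) bijective Y -> Y: injectivity is inherited,
   surjectivity onto Y is required; the cycle identity is inherited. *)
Definition sub_cycle_set (X : finType) (op : X -> X -> X) (Y : {set X}) : Prop :=
  (forall x y, x \in Y -> y \in Y -> op x y \in Y) /\
  (forall x, x \in Y -> forall z, z \in Y -> exists2 y, y \in Y & op x y = z).

Definition irreducible_cs (X : finType) (op : X -> X -> X) : Prop :=
  forall Y : {set X}, sub_cycle_set op Y -> Y = set0 \/ Y = setT.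

Record brace (B : Type) := Brace {
  badd : B -> B -> B; bopp : B -> B; bzero : B;
  bmul : B -> B -> B; binv : B -> B; bone : B;
  baddA : forall a b c, badd a (badd b c) = badd (badd a b) c;
  baddC : forall a b, badd a b = badd b a;
  badd0 : forall a, badd bzero a = a;
  baddN : forall a, badd (bopp a) a = bzero;
  bmulA : forall a b c, bmul a (bmul b c) = bmul (bmul a b) c;
  bmul1 : forall a, bmul bone a = a;
  bmulN : forall a, bmul (binv a) a = bone;
  bdistr : forall a b c,
    bmul a (badd b c) = badd (badd (bmul a b) (bopp a)) (bmul a c)
}.

Definition blambda B (Br : brace B) (a b : B) : B :=
  badd Br (bopp Br a) (bmul Br a b).

Definition bcycle B (Br : brace B) (a b : B) : B :=
  blambda Br (binv Br a) b.

Definition bi_subgroup B (Br : brace B) (S : B -> Prop) : Prop :=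
  S (bzero Br) /\ (forall a b, S a -> S b -> S (badd Br a b)) /\
  (forall a, S a -> S (bopp Br a)) /\
  S (bone Br) /\ (forall a b, S a -> S b -> S (bmul Br a b)) /\
  (forall a, S a -> S (binv Br a)).

Definition Bgen B (Br : brace B) (x : B) : B -> Prop :=
  fun b => forall S : B -> Prop, bi_subgroup Br S -> S x -> S b.

(* Main.v *)
Require Import Defs.
From mathcomp Require Import all_boot.
Set Implicit Arguments. Unset Strict Implicit. Unset Printing Implicit Defensive.

Lemma pigeon (T : finType) (g : nat -> T) : exists i j, i < j /\ g i = g j.
Proof.
pose h (i : 'I_(#|T|.+1)) := g i.
have : ~~ injectiveb h.
  apply/negP => /injectiveP/leq_card; by rewrite card_ord ltnn.
case/injectivePn => i [j] ij hij.
case: (ltngtP i j) => [lt|gt|eq].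
- by exists i, j.
- by exists j, i.
- by move: ij; rewrite (val_inj eq) eqxx.
Qed.

Section BraceLemmas.
Variables (B : finType) (Br : brace B).
Local Notation "a +' b" := (badd Br a b) (at level 50, left associativity).
Local Notation "a *' b" := (bmul Br a b) (at level 40, left associativity).
Local Notation "-' a" := (bopp Br a) (at level 35).
Local Notation "0'" := (bzero Br).
Local Notation "1'" := (bone Br).
Local Notation "a ^-'" := (binv Br a) (at level 3).
Local Notation lam := (blambda Br).

Lemma addr0' a : a +' 0' = a. Proof. by rewrite baddC badd0. Qed.
Lemma addrN' a : a +' -' a = 0'. Proof. by rewrite baddC baddN. Qed.
Lemma addKr' a b : -' a +' (a +' b) = b.
Proof. by rewrite baddA baddN badd0. Qed.
Lemma addrK' a b : a +' b +' -' b = a.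
Proof. by rewrite -baddA addrN' addr0'. Qed.
Lemma addI' a b c : a +' b = a +' c -> b = c.
Proof. by move=> h; rewrite -(addKr' a b) h addKr'. Qed.
Lemma oppr0' : -' 0' = 0'.
Proof. by rewrite -{2}(baddN Br 0') addr0'. Qed.
Lemma opprK' a : -' (-' a) = a.
Proof. by apply: (@addI' (-' a)); rewrite addrN' baddN. Qed.
Lemma opprD' a b : -' (a +' b) = -' a +' -' b.
Proof.
apply: (@addI' (a +' b)); rewrite addrN'.
by rewrite baddA (baddC Br a b) -(baddA Br b a) addrN' addr0' addrN'.
Qed.
Lemma oppr_eq a b : a +' b = 0' -> a = -' b.
Proof. by move=> h; apply: (@addI' b); rewrite addrN' baddC. Qed.

Lemma mulrV' a : a *' a^-' = 1'.
Proof.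
have h : a *' a^-' = (a^-')^-' *' (a^-' *' (a *' a^-')).
  by rewrite bmulA bmulN bmul1.
by rewrite h (bmulA Br (a^-') a) bmulN bmul1 bmulN.
Qed.
Lemma mulr1' a : a *' 1' = a.
Proof. by rewrite -(bmulN Br a) bmulA mulrV' bmul1. Qed.
Lemma mulr0' a : a *' 0' = a.
Proof.
have := bdistr Br a 0' 0'; rewrite badd0 => h.
have := congr1 (fun x => x +' -' (a *' 0')) h.
rewrite addrK' addrN' => /esym/(congr1 (fun x => x +' a)).
by rewrite -baddA baddN addr0' badd0.
Qed.
Lemma one0 : 1' = 0'.
Proof. by rewrite -(mulr0' 1') bmul1. Qed.

Lemma lamE a b : a *' b = a +' lam a b.
Proof. by rewrite /blambda baddA addrN' badd0. Qed.
Lemma lamD a b c : lam a (b +' c) = lam a b +' lam a c.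
Proof.
rewrite /blambda bdistr.
rewrite -!baddA; congr (_ +' _).
Qed.
Lemma lam0 a : lam a 0' = 0'.
Proof. by rewrite /blambda mulr0' baddN. Qed.
Lemma lamN a b : lam a (-' b) = -' lam a b.
Proof.
apply: oppr_eq; by rewrite -lamD baddN lam0.
Qed.
Lemma addNKr' a b : a +' (-' a +' b) = b.
Proof. by rewrite baddA addrN' badd0. Qed.
Lemma lamM a b c : lam (a *' b) c = lam a (lam b c).
Proof.
have -> : lam b c = -' b +' b *' c by [].
rewrite lamD lamN /blambda bmulA opprD' opprK'.
by rewrite (baddC Br a) -baddA addNKr'.
Qed.
Lemma lam1 b : lam 1' b = b.
Proof. by rewrite /blambda bmul1 one0 oppr0' badd0. Qed.
Lemma lamz b : lam 0' b = b.
Proof. by rewrite -one0 lam1. Qed.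
Lemma lamVK a b : lam a^-' (lam a b) = b.
Proof. by rewrite -lamM bmulN lam1. Qed.
Lemma lamKV a b : lam a (lam a^-' b) = b.
Proof. by rewrite -lamM mulrV' lam1. Qed.
Lemma addE a b : a +' b = a *' lam a^-' b.
Proof. by rewrite lamE lamKV. Qed.
Lemma invE a : a^-' = -' lam a^-' a.
Proof. by apply: oppr_eq; rewrite -lamE bmulN one0. Qed.

Fixpoint nsum n b := if n is k.+1 then b +' nsum k b else 0'.
Lemma nsumD m n b : nsum (m + n) b = nsum m b +' nsum n b.
Proof. elim: m => [|m IH] /=; first by rewrite badd0. by rewrite IH baddA. Qed.
Lemma oppr_nsum b : exists n, -' b = nsum n b.
Proof.
have [i [j [lt e]]] := pigeon (fun n => nsum n b).
move: e; rewrite /= -(subnK (ltnW lt)) nsumD => e.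
have h : nsum i b +' nsum (j-i) b = nsum i b +' 0'.
  by rewrite addr0' baddC -e.
move/addI': h.
case: (j - i) (subn_gt0 i j) => [|k]; first by rewrite lt.
move=> _ /= h.
exists k; by apply: esym; apply: oppr_eq; rewrite baddC.
Qed.
Lemma dir21 (X : finType) (op : X -> X -> X) (f : X -> B) :
  injective f -> (forall x y, f (op x y) = bcycle Br (f x) (f y)) ->
  (exists x : X, forall c : B,
     (exists y : X, f y = c) <-> (exists b : B, blambda Br b (f x) = c)) ->
  (forall x : X, forall b : B, Bgen Br (f x) b) -> irreducible_cs op.
Proof.
move=> finj fcomp [x0 horb] hgen Y [Ycl Ysur].
case: (set_0Vmem Y) => [->|[y yY]]; first by left.
right.
pose P b := (forall z, z \in Y -> exists2 w, w \in Y & lam b (f z) = f w) /\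
            (forall z, z \in Y -> exists2 w, w \in Y & lam b (f w) = f z).
pose Q b := forall c, P c -> P (lam c b).
have P0 : P 0'.
  by split=> z zY; exists z => //; rewrite lamz.
have PM : forall b c, P b -> P c -> P (b *' c).
  move=> b c [b1 b2] [c1 c2]; split=> z zY.
  - have [w wY e] := c1 z zY; have [w' w'Y e'] := b1 w wY.
    by exists w' => //; rewrite lamM e e'.
  - have [w wY e] := b2 z zY; have [w' w'Y e'] := c2 w wY.
    by exists w' => //; rewrite lamM e' e.
have PV : forall b, P b -> P b^-'.
  move=> b [b1 b2]; split=> z zY.
  - have [w wY e] := b2 z zY.
    by exists w => //; rewrite -e lamVK.
  - have [w wY e] := b1 z zY.
    by exists w => //; rewrite -e lamVK.
have Pf : forall z, z \in Y -> P (f z).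
  move=> z zY; split=> u uY.
  - have [w wY e] := Ysur z zY u uY.
    by exists w => //; rewrite -e fcomp /bcycle lamKV.
  - exists (op z u); first exact: Ycl.
    by rewrite fcomp /bcycle lamKV.
have QP : forall b, Q b -> P b.
  by move=> b qb; rewrite -[b]lamz; apply: (qb) P0.
have Qf : forall z, z \in Y -> Q (f z).
  move=> z zY c [c1 _]; have [w wY ->] := c1 z zY; exact: (Pf).
have Qlam : forall b d, Q b -> P d -> Q (lam d b).
  by move=> b d qb pd c pc; rewrite -lamM; apply: (qb); apply: (PM).
have L : forall b u d, Q b -> P u -> P d -> P (u +' lam d b).
  move=> b u d qb pu pd; rewrite addE -lamM; apply: (PM) => //.
  by apply: (qb); apply: (PM) => //; apply: (PV).
have Q0 : Q 0'.
  by move=> c _; rewrite lam0.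
have QD : forall b1 b2, Q b1 -> Q b2 -> Q (b1 +' b2).
  by move=> b1 b2 q1 q2 c pc; rewrite lamD; apply: (L) => //; apply: (q1).
have QM : forall b1 b2, Q b1 -> Q b2 -> Q (b1 *' b2).
  move=> b1 b2 q1 q2 c pc; rewrite lamE lamD -lamM; apply: (L) => //.
    exact: (q1).
  by apply: (PM) => //; apply: (QP).
have Qn : forall n b, Q b -> Q (nsum n b).
  elim=> [|n IH] b qb /=; first exact: (Q0).
  by apply: (QD) => //; apply: IH.
have QN : forall b, Q b -> Q (-' b).
  by move=> b qb; have [n ->] := oppr_nsum b; apply: (Qn).
have QV : forall b, Q b -> Q b^-'.
  move=> b qb; rewrite invE; apply: (QN); apply: (Qlam) => //.
  by apply: (PV); apply: (QP).
have bsQ : bi_subgroup Br Q.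
  split; first exact: (Q0).
  split; first exact: (QD).
  split; first exact: (QN).
  split; first by rewrite one0; exact: (Q0).
  split; first exact: (QM).
  exact: (QV).
have allP : forall b, P b.
  by move=> b; apply: (QP); apply: (hgen y b Q bsQ); apply: (Qf).
apply/setP => z; rewrite inE.
have [b1 e1] := (horb (f z)).1 (ex_intro _ z erefl).
have [b2 e2] := (horb (f y)).1 (ex_intro _ y erefl).
have [h1 _] := allP (b1 *' b2^-').
have [w wY e] := h1 y yY.
by rewrite lamM -e2 lamVK e1 in e; rewrite (finj _ _ e).
Qed.
End BraceLemmas.

From mathcomp Require Import all_boot all_fingroup all_algebra.
From Stdlib Require Import ClassicalEpsilon.
From mathcomp Require Import zify.
Import GRing.Theory.

Section Construction.
Variables (X : finType) (op : X -> X -> X).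
Hypothesis opinj : forall x, injective (op x).
Hypothesis cyc : forall x y z, op (op x y) (op x z) = op (op y x) (op y z).

Definition sig x : {perm X} := perm (@opinj x).
Lemma sigE x y : sig x y = op x y. Proof. by rewrite permE. Qed.
Definition step (p : {perm X}) (w : X) : {perm X} := (p * sig (p w))%g.
Lemma step_swap p x y : step (step p x) y = step (step p y) x.
Proof. by apply/permP => z; rewrite /step !permM !sigE cyc. Qed.

Definition Tl (l : seq X) := foldl step 1%g l.

Lemma foldl_rem p l x : x \in l -> foldl step p l = foldl step p (x :: rem x l).
Proof.
elim: l p => [|y l IH] p //=.
case: (eqVneq y x) => [->|ne] //= ; rewrite inE eq_sym (negbTE ne) /= => xl.
by rewrite (IH _ xl) /= step_swap.
Qed.

Lemma foldl_perm l1 l2 p : perm_eq l1 l2 -> foldl step p l1 = foldl step p l2.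
Proof.
elim: l1 l2 p => [|x l1 IH] l2 p.
  by move/perm_size; case: l2.
move=> h.
have xl2 : x \in l2 by rewrite -(perm_mem h) mem_head.
rewrite (foldl_rem p xl2) /=; apply: IH.
by rewrite -(perm_cons x); apply: perm_trans h _; apply: perm_to_rem.
Qed.

Definition lst (a : X -> nat) := flatten [seq nseq (a x) x | x <- enum X].
Lemma count_lst a y : count_mem y (lst a) = a y.
Proof.
rewrite count_flatten -map_comp.
rewrite (@eq_map _ _ _ (fun x => (x == y) * a x)); last by move=> x; rewrite /= count_nseq.
rewrite sumnE big_map big_enum /= (bigD1 y) //= eqxx mul1n big1 ?addn0 //.
by move=> x /negbTE ->.
Qed.

Definition T a := Tl (lst a).
Lemma TE a l : (forall y, a y = count_mem y l) -> T a = Tl l.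
Proof.
move=> h; apply: foldl_perm; apply/allP => y _ /=.
by rewrite count_lst h.
Qed.
Lemma T_ext a b : a =1 b -> T a = T b.
Proof. by move=> h; apply: TE => y; rewrite count_lst h. Qed.
Lemma T0 : T (fun _ => 0) = 1%g.
Proof. by rewrite (TE (l := [::])). Qed.
Lemma T_add1 a w : T (fun y => a y + (y == w)) = step (T a) w.
Proof.
rewrite (TE (l := rcons (lst a) w)); first by rewrite /Tl foldl_rcons.
by move=> y; rewrite -cats1 count_cat count_lst /= addn0 eq_sym.
Qed.
Lemma Te x : T (fun y => (y == x) : nat) = sig x.
Proof.
rewrite (T_ext (b := fun y => 0 + (y == x))) // T_add1 T0.
by rewrite /step perm1 mul1g.
Qed.

Definition comp (a b : X -> nat) := fun y => a y + b (T a y).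
Lemma T_comp a b : T (comp a b) = (T a * T b)%g.
Proof.
have h : forall l, T (comp a (fun y => count_mem y l)) = (T a * Tl l)%g.
  elim/last_ind => [|l w IH].
    by rewrite /Tl /= mulg1; apply: T_ext => y; rewrite /comp /= addn0.
  rewrite (T_ext (b := fun y => comp a (fun y => count_mem y l) y + (y == (T a)^-1%g w))).
    by rewrite T_add1 IH /step /Tl foldl_rcons /step permM permKV mulgA.
  move=> y; rewrite /comp -cats1 count_cat /= addn0 addnA; congr (_ + _).
  by rewrite -[in RHS](inj_eq (@perm_inj _ (T a))) permKV eq_sym.
rewrite -[T b]/(Tl (lst b)) -h; apply: T_ext => y.
by rewrite /comp count_lst.
Qed.

Definition Qp (q : {perm X}) := forall k, T k = 1%g -> T (k \o q) = 1%g.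
Lemma Qp_mul p q : Qp p -> Qp q -> Qp (p * q)%g.
Proof.
move=> hp hq k hk.
have -> : T (k \o (p * q)%g) = T ((k \o q) \o p) by apply: T_ext => y; rewrite /= permM.
exact: hp (hq k hk).
Qed.
Lemma Qp1 : Qp 1%g.
Proof. by move=> k hk; rewrite (T_ext (b := k)) // => y; rewrite /= perm1. Qed.
Lemma Qp_sigV x : Qp (sig x)^-1%g.
Proof.
move=> k hk.
have e1 : T (fun y => (y == x) + k y) = sig x.
  rewrite (T_ext (b := fun y => k y + (y == x))); last by move=> y; rewrite addnC.
  by rewrite T_add1 hk /step perm1 mul1g.
have e2 : T (fun y => (y == x) + k y) = (sig x * T (k \o (sig x)^-1%g))%g.
  rewrite -Te -T_comp; apply: T_ext => y.
  by rewrite /comp Te /= permK.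
by move: e2; rewrite e1 -{1}(mulg1 (sig x)) => /mulgI <-.
Qed.
Lemma Qp_exp q n : Qp q -> Qp (q ^+ n)%g.
Proof.
move=> hq; elim: n => [|n IH]; first by rewrite expg0; exact: Qp1.
by rewrite expgS; apply: Qp_mul.
Qed.
Lemma Qp_sig x : Qp (sig x).
Proof. by rewrite -[sig x]invgK invg_expg; apply: Qp_exp; apply: Qp_sigV. Qed.
Lemma Qp_Tl l p : Qp p -> Qp (foldl step p l).
Proof.
elim: l p => //= w l IH p hp; apply: IH; rewrite /step.
by apply: Qp_mul => //; apply: Qp_sig.
Qed.
Lemma Qp_TlV l p : Qp p^-1%g -> Qp (foldl step p l)^-1%g.
Proof.
elim: l p => //= w l IH p hp; apply: IH; rewrite /step invMg.
by apply: Qp_mul => //; apply: Qp_sigV.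
Qed.
Lemma QpT a : Qp (T a).
Proof. apply: Qp_Tl; exact: Qp1. Qed.
Lemma QpTV a : Qp (T a)^-1%g.
Proof. apply: Qp_TlV; rewrite invg1; exact: Qp1. Qed.

Lemma T_addK a k : T k = 1%g -> T (fun y => a y + k y) = T a.
Proof.
move=> hk; rewrite (T_ext (b := comp a (k \o (T a)^-1%g))).
  by rewrite T_comp (QpTV a hk) mulg1.
by move=> y; rewrite /comp /= permK.
Qed.
Lemma K_add k1 k2 : T k1 = 1%g -> T k2 = 1%g -> T (fun y => k1 y + k2 y) = 1%g.
Proof. by move=> h1 h2; rewrite T_addK. Qed.
Lemma K_mul m k : T k = 1%g -> T (fun y => m * k y) = 1%g.
Proof.
move=> hk; elim: m => [|m IH].
  by rewrite (T_ext (b := fun _ => 0)) ?T0.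
rewrite (T_ext (b := fun y => k y + m * k y)); first exact: K_add.
by move=> y; rewrite mulSn.
Qed.

Lemma period w : exists2 p, 0 < p & T (fun y => p * (y == w)) = 1%g.
Proof.
have [i [j [lt e]]] := pigeon (fun n => T (fun y => n * (y == w))).
exists (j - i); first by rewrite subn_gt0.
move: e => /= e.
pose a := fun y => i * (y == w).
pose c := (fun y => (j - i) * (y == w)) \o (T a)^-1%g.
have h : T (comp a c) = T a.
  rewrite [RHS]e; apply: T_ext => y.
  by rewrite /comp /c /a /= permK -mulnDl subnKC // ltnW.
have h2 : T c = 1%g.
  by apply: (@mulgI _ (T a)); rewrite mulg1 -T_comp.
have := QpT a h2 => <-; apply: T_ext => y.
by rewrite /c /= permK.
Qed.

Lemma uniformN : exists2 N, 1 < N & forall w, T (fun y => N * (y == w)) = 1%g.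
Proof.
suff : forall s : seq X, exists2 N, 0 < N & forall w, w \in s -> T (fun y => N * (y == w)) = 1%g.
  case/(_ (enum X)) => N N0 h; exists (2 * N).
    by clear h; lia.
  move=> w; rewrite (T_ext (b := fun y => 2 * (N * (y == w)))); last by move=> y; rewrite mulnA.
  by apply: K_mul; apply: h; rewrite mem_enum.
elim=> [|w s [N N0 h]]; first by exists 1.
have [p p0 hp] := period w.
exists (p * N); first by rewrite muln_gt0 p0.
move=> v; rewrite inE => /orP [/eqP -> | vs].
  rewrite (T_ext (b := fun y => N * (p * (y == w)))); first exact: K_mul.
  by move=> y; rewrite mulnCA mulnA.
rewrite (T_ext (b := fun y => p * (N * (y == v)))); first by apply: K_mul; apply: h.
by move=> y; rewrite mulnA.
Qed.

Lemma T_mod N : (forall w, T (fun y => N * (y == w)) = 1%g) ->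
  forall a, T a = T (fun y => a y %% N).
Proof.
move=> hN a.
have hK : forall d, T (fun y => N * d y) = 1%g.
  move=> d.
  have hl : forall l, T (fun y => N * count_mem y l) = 1%g.
    elim=> [|w l IH].
      by rewrite (T_ext (b := fun _ => 0)) ?T0 // => y; rewrite /= muln0.
    rewrite (T_ext (b := fun y => N * (y == w) + N * count_mem y l)).
      by apply: K_add.
    by move=> y /=; rewrite mulnDr eq_sym.
  rewrite -(hl (lst d)); apply: T_ext => y; by rewrite count_lst.
rewrite -(T_addK (fun y => a y %% N) (hK (fun y => a y %/ N))).
apply: T_ext => y.
by rewrite /= addnC mulnC -divn_eq.
Qed.
End Construction.

Section FinBrace.
Variables (X : finType) (op : X -> X -> X).
Hypothesis opinj : forall x, injective (op x).
Hypothesis cyc : forall x y z, op (op x y) (op x z) = op (op y x) (op y z).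
Variable M : nat.
Hypothesis hN : forall w, T opinj (fun y => M.+2 * (y == w)) = 1%g.

Local Notation Z := 'I_(M.+2).
Local Notation B := {ffun X -> Z}.
Local Notation T := (T opinj).
Local Notation sig := (sig opinj).

Definition lift (a : B) : X -> nat := fun y => nat_of_ord (a y).
Definition Tb (a : B) := T (lift a).
Lemma valD (u v : Z) : val (u + v)%R = (val u + val v) %% M.+2. Proof. by []. Qed.

Definition bmul' (a b : B) : B := [ffun y => (a y + b (Tb a y))%R].
Definition binv' (a : B) : B := [ffun z => (- a ((Tb a)^-1%g z))%R].

Lemma Tb_mul a b : Tb (bmul' a b) = (Tb a * Tb b)%g.
Proof.
rewrite /Tb -(T_comp opinj cyc) (T_mod cyc hN (comp opinj (lift a) (lift b))).
by apply: (T_ext opinj cyc) => y; rewrite /lift /comp ffunE valD.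
Qed.
Lemma Tb0 : Tb 0%R = 1%g.
Proof.
rewrite /Tb -(T0 opinj cyc); apply: (T_ext opinj cyc) => y.
by rewrite /lift ffunE.
Qed.
Lemma bmul0l a : bmul' 0%R a = a.
Proof. by apply/ffunP => y; rewrite !ffunE Tb0 perm1 add0r. Qed.
Lemma bmul0r a : bmul' a 0%R = a.
Proof. by apply/ffunP => y; rewrite !ffunE addr0. Qed.
Lemma bmulA' a b c : bmul' a (bmul' b c) = bmul' (bmul' a b) c.
Proof. by apply/ffunP => y; rewrite !ffunE Tb_mul permM addrA. Qed.
Lemma bmulV a : bmul' a (binv' a) = 0%R.
Proof. by apply/ffunP => y; rewrite !ffunE permK addrN. Qed.
Lemma bmulVl a : bmul' (binv' a) a = 0%R.
Proof.
have e : a = binv' (binv' a).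
  transitivity (bmul' (bmul' a (binv' a)) (binv' (binv' a))).
    by rewrite -bmulA' bmulV bmul0r.
  by rewrite bmulV bmul0l.
by rewrite {2}e bmulV.
Qed.
Lemma bdistr' a b c : bmul' a (b + c)%R = (bmul' a b - a + bmul' a c)%R.
Proof. by apply/ffunP => y; rewrite !ffunE !addrA addrNK. Qed.

Definition Br : brace B :=
  @Brace B (fun a b => a + b)%R (fun a => - a)%R 0%R bmul' binv' 0%R
    (@addrA _) (@addrC _) (@add0r _) (@addNr _) bmulA' bmul0l bmulVl bdistr'.

Definition fX (x : X) : B := [ffun y => if y == x then 1%R else 0%R].

Lemma Tb_inv a : Tb (binv' a) = (Tb a)^-1%g.
Proof. by apply/esym/eqP; rewrite eq_invg_mul -Tb_mul bmulV Tb0. Qed.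
Lemma Tb_f x : Tb (fX x) = sig x.
Proof.
rewrite /Tb -(Te opinj cyc x); apply: (T_ext opinj cyc) => y.
by rewrite /lift ffunE; case: (y == x).
Qed.
Lemma lam_f b x : blambda Br b (fX x) = fX ((Tb b)^-1%g x).
Proof.
apply/ffunP => z; rewrite /blambda /= !ffunE addKr.
by rewrite -[in RHS](inj_eq (@perm_inj _ (Tb b))) permKV.
Qed.
Lemma fX_inj : injective fX.
Proof.
move=> x x' /ffunP/(_ x); rewrite !ffunE eqxx.
by case: eqP => // _ /(congr1 val).
Qed.
Lemma fX_comp x y : fX (op x y) = bcycle Br (fX x) (fX y).
Proof.
by rewrite /bcycle lam_f /= Tb_inv Tb_f invgK sigE.
Qed.

Lemma dir12 : irreducible_cs op -> inhabited X ->
   exists (B : finType) (Br : brace B) (f : X -> B),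
     injective f /\
     (forall x y, f (op x y) = bcycle Br (f x) (f y)) /\
     (exists x : X, forall c : B,
         (exists y : X, f y = c) <-> (exists b : B, blambda Br b (f x) = c)) /\
     (forall x : X, forall b : B, Bgen Br (f x) b).
Proof.
move=> hirr [x0].
exists {ffun X -> Z}, Br, fX.
split; first exact: fX_inj.
split; first exact: fX_comp.
split.
- exists x0 => c.
  pose Y := [set y | [exists b : B, (Tb b)^-1%g x0 == y]].
  have hY : sub_cycle_set op Y.
    split.
    + move=> y z; rewrite !inE => /existsP [b /eqP <-] /existsP [c' /eqP <-].
      apply/existsP; exists (bmul' (binv' (fX ((Tb b)^-1%g x0))) c').
      by rewrite Tb_mul Tb_inv Tb_f invMg invgK permM sigE.
    + move=> x; rewrite inE => /existsP [b _] z; rewrite inE => /existsP [c' /eqP <-].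
      exists ((sig x)^-1%g ((Tb c')^-1%g x0)).
        rewrite inE; apply/existsP; exists (bmul' (fX x) c').
        by rewrite Tb_mul Tb_f invMg permM.
      by rewrite -sigE permKV.
  have x0Y : x0 \in Y.
    by rewrite inE; apply/existsP; exists 0%R; rewrite Tb0 invg1 perm1.
  case: (hirr Y hY) => [Y0|YT].
    by move: x0Y; rewrite Y0 inE.
  split.
  + move=> [y <-].
    have : y \in Y by rewrite YT inE.
    by rewrite inE => /existsP [b /eqP <-]; exists b; rewrite lam_f.
  + move=> [b <-]; exists ((Tb b)^-1%g x0).
    by rewrite lam_f.
- rewrite /Bgen => x b S [S0 [SD [SN [S1 [SM SV]]]]] Sx.
  pose Y := [set y | if excluded_middle_informative (S (fX y)) then true else false].
  have YP : forall y, y \in Y <-> S (fX y).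
    by move=> y; rewrite inE; case: excluded_middle_informative.
  have hY : sub_cycle_set op Y.
    split.
    + move=> y z /YP hy /YP hz; apply/YP; rewrite fX_comp /bcycle /blambda.
      apply: SD; first by apply: SN; apply: SV.
      by apply: SM => //; apply: SV.
    + move=> y /YP hy z /YP hz; exists ((sig y)^-1%g z).
        apply/YP.
        have -> : fX ((sig y)^-1%g z) = blambda Br (fX y) (fX z) by rewrite lam_f Tb_f.
        rewrite /blambda; apply: SD; [exact: SN | exact: SM].
      by rewrite -sigE permKV.
  have allS : forall y, S (fX y).
    case: (hirr Y hY) => [Y0|YT].
      by move: (proj2 (YP x) Sx); rewrite Y0 inE.
    by move=> y; apply/YP; rewrite YT inE.
  have Smul : forall a n, S a -> S (a *+ n)%R.
    move=> a; elim=> [|n IH] Sa; first exact: S0.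
    by rewrite mulrS; apply: SD => //; apply: IH.
  have -> : b = (\sum_(y : X) fX y *+ val (b y))%R.
    apply/ffunP => z; rewrite sum_ffunE (bigD1 z) //= big1 ?addr0.
      by rewrite ffunMnE ffunE eqxx natr_Zp.
    by move=> y ne; rewrite ffunMnE ffunE eq_sym (negbTE ne) mul0rn.
  apply: big_ind => [|u v|y _]; [exact: S0 | exact: SD | apply: Smul; exact: allS].
Qed.
End FinBrace.

Theorem mainTheorem7 (X : finType) (op : X -> X -> X) :
  is_cycle_set op ->
  (irreducible_cs op <->
   exists (B : finType) (Br : brace B) (f : X -> B),
     (* X is a subset of B (via the injection f) with the induced structure *)
     injective f /\
     (forall x y, f (op x y) = bcycle Br (f x) (f y)) /\
     (* X = { lambda_b(x) : b in B } for some x in X *)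
     (exists x : X, forall c : B,
         (exists y : X, f y = c) <-> (exists b : B, blambda Br b (f x) = c)) /\
     (* B = B(x) for all x in X *)
     (forall x : X, forall b : B, Bgen Br (f x) b)).
Proof.
move=> [inh [bij cycl]].
have opinj : forall x, injective (op x) by move=> x; apply: bij_inj (bij x).
split.
- move=> hirr.
  have [N N1 hN] := uniformN opinj cycl.
  move: N N1 hN => [|[|M]] // _ hN.
  exact: (@dir12 X op opinj cycl M hN hirr inh).
- case=> B [Br [f [fi [fc [horb hgen]]]]].
  exact: (dir21 fi fc horb hgen).
Qed.
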